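(* Let $T$ be a complete theory with $SOP_3$, witnessed by an indiscernible sequence $\langle a_i:i<\omega\rangle$ and formulas $\varphi(x;y),\psi(x;y)$ satisfying: (1) $\{\varphi(x;y),\psi(x;y)\}$ is contradictory; (2) there is a sequence $\langle c_j:j<\omega\rangle$ with $\varphi(c_j;a_i)$ whenever $i\le j$ and $\psi(c_j;a_i)$ whenever $i>j$; (3) if $i<j$ then $\{\varphi(x;a_j),\psi(x;a_i)\}$ is contradictory. Then the formula $\rho(x;y,z):=\varphi(x;y)\wedge\psi(x;z)$ has the $\infty$-compatible order property on some set $A'\subseteq P_1$ (where $\langle P_n\rangle$ is the characteristic sequence of $\rho$), and $A'$ can be chosen so that the characteristic sequence restricted to $A'$ has support $2$.
   Context: Work in a sufficiently saturated model of $T$. For a formula $\rho(x;w)$ its characteristic sequence is $P_n(w_1,\dots,w_n):=\exists x\bigwedge_{i\le n}\rho(x;w_i)$ (here $w=(y,z)$). $\rho$ has the $\infty$-compatible order property on $A'\subseteq P_1$ if there exist $\langle \alpha_i,\beta_i:i<\omega\rangle$ in $A'$ such that for all $m<\omega$ and all indices, $P_{2m}(\alpha_{i_1},\beta_{j_1},\dots,\alpha_{i_m},\beta_{j_m})$ holds iff $\max\{i_1,\dots,i_m\}<\min\{j_1,\dots,j_m\}$. The sequence restricted to $A'$ has support $2$ if for all $n$ and all $w_1,\dots,w_n\in A'$, $P_n(w_1,\dots,w_n)$ holds iff $P_2(w_i,w_j)$ holds for all $i,j\le n$. *)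

(* Defs.v *)
From mathcomp Require Import all_boot.
From Stdlib Require List.

Set Implicit Arguments.
Unset Strict Implicit.
Unset Printing Implicit Defensive.

Record signature := Signature {
  fsym : Type; fari : fsym -> nat;
  rsym : Type; rari : rsym -> nat }.

Section Syntax.
Variable L : signature.

Inductive term : Type :=
  | Var : nat -> term
  | App : forall f : fsym L, ('I_(fari f) -> term) -> term.

(** Formulas: =, relations, falsum, implication, universal quantifier
    (the other connectives are definable classically). *)
Inductive formula : Type :=
  | Eq  : term -> term -> formula
  | Rel : forall r : rsym L, ('I_(rari r) -> term) -> formula
  | Fls : formula
  | Imp : formula -> formula -> formula
  | All : nat -> formula -> formula.

End Syntax.

Arguments Var {L}.
Arguments Fls {L}.

Record structure (L : signature) := Structure {
  dom :> Type;
  pt : dom;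
  fint : forall f : fsym L, ('I_(fari f) -> dom) -> dom;
  rint : forall r : rsym L, ('I_(rari r) -> dom) -> Prop }.

Section Semantics.
Variables (L : signature) (M : structure L).

Fixpoint eval (e : nat -> M) (t : term L) : M :=
  match t with
  | Var n => e n
  | App f ts => @fint L M f (fun i => eval e (ts i))
  end.

Definition upd (e : nat -> M) (n : nat) (m : M) : nat -> M :=
  fun k => if k == n then m else e k.

Fixpoint sat (e : nat -> M) (phi : formula L) : Prop :=
  match phi with
  | Eq t u => eval e t = eval e u
  | Rel r ts => @rint L M r (fun i => eval e (ts i))
  | Fls => False
  | Imp a b => sat e a -> sat e b
  | All n a => forall m : M, sat (upd e n m) a
  end.

Definition env (s : seq M) : nat -> M := fun n => nth (@pt L M) s n.

Definition holds (phi : formula L) (s : seq M) : Prop := sat (env s) phi.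

(** phi's free variables are (semantically) among v_0, ..., v_{k-1}. *)
Definition depends_on (k : nat) (phi : formula L) : Prop :=
  forall e e' : nat -> M, (forall n, n < k -> e n = e' n) ->
    (sat e phi <-> sat e' phi).

(** A formula with parameters is a pair (theta, p): theta(x; p). *)
Definition aleph1_saturated : Prop :=
  forall (k : nat) (A : nat -> M) (Sigma : formula L * seq M -> Prop),
    (forall theta p, Sigma (theta, p) ->
        depends_on (k + size p) theta /\
        forall q, List.In q p -> exists n, A n = q) ->
    (forall l : seq (formula L * seq M),
        (forall q, List.In q l -> Sigma q) ->
        exists x, size x = k /\ forall q, List.In q l -> holds q.1 (x ++ q.2)) ->
    exists x, size x = k /\
      forall theta p, Sigma (theta, p) -> holds theta (x ++ p).

Definition indiscernible (n : nat) (a : nat -> seq M) : Prop :=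
  (forall i, size (a i) = n) /\
  forall (k : nat) (theta : formula L) (I J : seq nat),
    size I = k -> size J = k -> sorted ltn I -> sorted ltn J ->
    depends_on (k * n) theta ->
    (holds theta (flatten (map a I)) <-> holds theta (flatten (map a J))).

(** rho(x; y, z) := phi(x; y) /\ psi(x; z), with |x| = nx, |y| = |z| = ny;
    w = y ++ z. *)
Definition rho (nx ny : nat) (phi psi : formula L) (c w : seq M) : Prop :=
  holds phi (c ++ take ny w) /\ holds psi (c ++ drop ny w).

(** Characteristic sequence of rho: P_n(w_1,...,w_n) = exists x, /\_i rho(x; w_i),
    where ws = [:: w_1; ...; w_n]. *)
Definition charP (nx ny : nat) (phi psi : formula L) (ws : seq (seq M)) : Prop :=
  exists c, size c = nx /\ forall w, List.In w ws -> rho nx ny phi psi c w.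

Definition inf_cop (P : seq (seq M) -> Prop) (A' : seq M -> Prop) : Prop :=
  exists alpha beta : nat -> seq M,
    (forall i, A' (alpha i) /\ A' (beta i)) /\
    forall I J : seq nat, size I = size J -> 0 < size I ->
      (P (flatten [seq [:: alpha ij.1; beta ij.2] | ij <- zip I J]) <->
       all (fun i => all (fun j => i < j) J) I).

Definition support2 (P : seq (seq M) -> Prop) (A' : seq M -> Prop) : Prop :=
  forall ws : seq (seq M), (forall w, List.In w ws -> A' w) ->
    (P ws <-> forall w1 w2, List.In w1 ws -> List.In w2 ws -> P [:: w1; w2]).

End Semantics.

Arguments holds {L} M phi s.
Arguments indiscernible {L} M n a.
Arguments rho {L} M nx ny phi psi c w.
Arguments charP {L} M nx ny phi psi ws.
Arguments inf_cop {L} M P A'.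
Arguments support2 {L} M P A'.

(* Main.v *)
Require Import Defs.
From mathcomp Require Import all_boot zify.
From Stdlib Require List FunctionalExtensionality.

Fixpoint tren (L : signature) (s : nat -> nat) (t : term L) {struct t} : term L :=
  match t with
  | Var n => Var (s n)
  | App f ts => @App L f (fun i => tren L s (ts i))
  end.

Fixpoint fren (L : signature) (s : nat -> nat) (p : formula L) : formula L :=
  match p with
  | Eq t u => Eq (tren L s t) (tren L s u)
  | Rel r ts => @Rel L r (fun i => tren L s (ts i))
  | Fls => Fls
  | Imp a b => Imp (fren L s a) (fren L s b)
  | All n a => All (s n) (fren L s a)
  end.

Arguments tren {L}. Arguments fren {L}.
Lemma eval_ren (L : signature) (M : structure L) s (e : nat -> M) t :
  eval e (tren s t) = eval (fun k => e (s k)) t.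
Proof.
elim: t => //= f ts IH; congr fint.
by apply: FunctionalExtensionality.functional_extensionality => i.
Qed.

Lemma sat_ren (L : signature) (M : structure L) s (p : formula L) :
  injective s -> forall e : nat -> M, sat e (fren s p) <-> sat (fun k => e (s k)) p.
Proof.
move=> sinj; elim: p => /=.
- by move=> t u e; rewrite !eval_ren.
- move=> r ts e.
  have -> : (fun i => eval e (tren s (ts i))) = (fun i => eval (fun k => e (s k)) (ts i)).
    by apply: FunctionalExtensionality.functional_extensionality => i; rewrite eval_ren.
  by [].
- by [].
- by move=> a IHa b IHb e; rewrite IHa IHb.
- move=> n a IH e.
  have E : forall m, (fun k => upd e (s n) m (s k)) = upd (fun k => e (s k)) n m.
    move=> m; apply: FunctionalExtensionality.functional_extensionality => k.
    by rewrite /upd (inj_eq sinj).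
  by split => H m; [rewrite -E -IH | rewrite IH E].
Qed.

Lemma In_cat (T : Type) (x : T) s1 s2 : List.In x (s1 ++ s2) <-> List.In x s1 \/ List.In x s2.
Proof. elim: s1 => /= [|y s IH]; [tauto|rewrite IH; tauto]. Qed.

Lemma In_map (S T : Type) (f : S -> T) y s :
  List.In y (map f s) <-> exists x, List.In x s /\ y = f x.
Proof.
elim: s => /= [|x s IH]; first by split => // -[? []].
rewrite IH; split.
- case=> [<-|[z [zs ->]]]; [by exists x; auto | by exists z; auto].
- case=> z [[<-|zs] ->]; [by left | by right; exists z].
Qed.

Lemma In_flatten (T : Type) (y : T) ss :
  List.In y (flatten ss) <-> exists s, List.In s ss /\ List.In y s.
Proof.
elim: ss => /= [|s ss IH]; first by split => // -[? []].
rewrite In_cat IH; split.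
- case=> [h|[t [h1 h2]]]; [by exists s; auto | by exists t; auto].
- case=> t [[<-|h1] h2]; [by left | by right; exists t].
Qed.

Lemma In_mem (T : eqType) (x : T) s : List.In x s <-> x \in s.
Proof.
elim: s => //= y s IH; rewrite in_cons IH; split.
- by case=> [->|->]; rewrite ?eqxx ?orbT.
- by case/orP=> [/eqP->|]; auto.
Qed.

Lemma In_nth (T : Type) (d : T) x s : List.In x s -> exists i, i < size s /\ nth d s i = x.
Proof.
elim: s => //= y s IH [<-|/IH [i [h1 h2]]]; first by exists 0.
by exists i.+1.
Qed.

Lemma get_b (L : signature) (M : structure L)
  (nx ny : nat) (psi : formula L) (a : nat -> seq M) (c : nat -> seq M) :
  aleph1_saturated M -> depends_on M (nx + ny) psi ->
  (forall i, size (a i) = ny) -> (forall j, size (c j) = nx) ->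
  (forall i j, j < i -> holds M psi (c j ++ a i)) ->
  exists b, size b = ny /\ forall j, holds M psi (c j ++ b).
Proof.
move=> Hsat dpsi asz csz Hc.
pose sg k := if k < nx then ny + k else if k < nx + ny then k - nx else k.
have sginj : injective sg.
  by move=> k1 k2; rewrite /sg; do 4?case: ifP; lia.
pose theta := fren sg psi.
have Hth : forall (y x : seq M), size y = ny -> size x = nx ->
    (holds M theta (y ++ x) <-> holds M psi (x ++ y)).
  move=> y x ysz xsz; rewrite /holds /theta sat_ren //.
  apply: dpsi => k kl; rewrite /env /sg !nth_cat ysz xsz.
  case: (ltnP k nx) => h1.
    have -> : (ny + k < ny) = false by lia.
    by rewrite addKn.
  have -> : k < nx + ny by [].
  by have -> : k - nx < ny by lia.
have Hdep : depends_on M (ny + nx) theta.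
  move=> e e' h; rewrite /theta !sat_ren //.
  apply: dpsi => k kl; apply: h; rewrite /sg; do 2?case: ifP; lia.
pose A n := nth (pt M) (c (n %/ nx)) (n %% nx).
pose Sigma (q : formula L * seq M) := q.1 = theta /\ exists j, q.2 = c j.
have := Hsat ny A Sigma.
case.
- move=> th p [/= -> [j ->]]; split; first by rewrite csz.
  move=> q /(@In_nth _ (pt M)) [i [ilt <-]].
  rewrite csz in ilt.
  exists (j * nx + i); rewrite /A.
  have nx0 : 0 < nx by lia.
  by rewrite divnMDl // divn_small // addn0 modnMDl modn_small.
- move=> l.
  elim: l => [|q l IH] Hl.
    by exists (a 0); split => // q [].
  have [N HN] : exists N, forall q', List.In q' (q :: l) -> exists j, j < N /\ q' = (theta, c j).
    clear IH.
    elim: (q :: l) Hl => [|q' l' IH'] Hl'; first by exists 0.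
    have [N HN] := IH' (fun q'' h => Hl' q'' (or_intror h)).
    have [qt [j qj]] := Hl' q' (or_introl erefl).
    exists (maxn N j.+1) => q'' [<-|h].
      exists j; split; first by lia.
      by case: q' qt qj {Hl'} => /= ? ? -> ->.
    have [j' [h1 h2]] := HN _ h; exists j'; split => //; lia.
  exists (a N); split => // q' /HN [j [jN ->]] /=.
  by apply/Hth => //; apply: Hc.
- move=> b [bsz Hb]; exists b; split => // j.
  by apply/(Hth b (c j)) => //; apply: Hb; split => //; exists j.
Qed.

Lemma fold_max_spec (T : Type) (f : T -> nat) (rs : seq T) :
  (rs = [::] \/ exists r0, List.In r0 rs /\ f r0 = foldr (fun r m => maxn (f r) m) 0 rs) /\
  forall r, List.In r rs -> f r <= foldr (fun r m => maxn (f r) m) 0 rs.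
Proof.
elim: rs => [|r rs [IH1 IH2]] /=; first by split; [left|].
split.
  right; case: (leqP (foldr (fun r m => maxn (f r) m) 0 rs) (f r)) => h.
    by exists r; split; [left|].

  case: IH1 => [E|[r0 [h1 h2]]].
    by rewrite E in h.
  by exists r0; split; [right|].
move=> r' [<-|h]; first exact: leq_maxl.
by apply: leq_trans (IH2 _ h) (leq_maxr _ _).
Qed.

Theorem mainTheorem8 (L : signature) (M : structure L)
  (nx ny : nat) (phi psi : formula L) (a : nat -> seq M) :
  aleph1_saturated M ->
  depends_on M (nx + ny) phi -> depends_on M (nx + ny) psi ->
  indiscernible M ny a ->
  (* (1) {phi(x;y), psi(x;y)} is contradictory *)
  ~ (exists x y : seq M, size x = nx /\ size y = ny /\
        holds M phi (x ++ y) /\ holds M psi (x ++ y)) ->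
  (* (2) *)
  (exists c : nat -> seq M, (forall j, size (c j) = nx) /\
     forall i j, (i <= j -> holds M phi (c j ++ a i)) /\
                 (j < i -> holds M psi (c j ++ a i))) ->
  (* (3) *)
  (forall i j, i < j -> ~ exists x : seq M, size x = nx /\
       holds M phi (x ++ a j) /\ holds M psi (x ++ a i)) ->
  exists A' : seq M -> Prop,
    (forall w, A' w -> size w = ny + ny /\ charP M nx ny phi psi [:: w]) /\
    inf_cop M (charP M nx ny phi psi) A' /\
    support2 M (charP M nx ny phi psi) A'.
Proof.
move=> Hsat dphi dpsi [asz _] H1 [c [csz Hc]] H3.
have [b [bsz Hb]] := @get_b _ _ nx ny psi a c Hsat dpsi asz csz (fun i j h => (Hc i j).2 h).
pose zp (u : option nat) := if u is Some q then a q else b.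
pose mk (r : nat * option nat) := a r.1 ++ zp r.2.
pose ltu (p : nat) (u : option nat) := if u is Some q then p < q else true.
have zpsz : forall u, size (zp u) = ny by case.
have Hback : forall ws p u p' u', charP M nx ny phi psi ws ->
    List.In (mk (p,u)) ws -> List.In (mk (p',u')) ws -> ltu p u'.
  move=> ws p u p' u' [x [xsz Hx]] i1 i2.
  case: u' i2 => [q|] //= i2.
  have [h1 _] := Hx _ i1; have [_ h2] := Hx _ i2.
  rewrite /mk /= take_size_cat ?asz // in h1.
  rewrite /mk /= drop_size_cat ?asz // in h2.
  case: (ltnP p q) => // hqp; exfalso.
  rewrite leq_eqVlt in hqp; case/orP: hqp => [/eqP e|lt].
    by subst; apply: H1; exists x, (a p).
  by apply: (H3 q p lt); exists x.
have Hforth : forall rs, (forall r r', List.In r rs -> List.In r' rs -> ltu r.1 r'.2) ->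
    charP M nx ny phi psi (map mk rs).
  move=> rs Hrs.
  have [[E|[r0 [r0in r0m]]] Hle] := @fold_max_spec _ (fun r : nat * option nat => r.1) rs.
    by exists (c 0); split => //; rewrite E.
  set m := foldr _ _ _ in r0m Hle.
  exists (c m); split => // w /In_map [r [rin ->]]; split.
    rewrite /mk take_size_cat ?asz //; apply: (Hc _ _).1; exact: Hle.
  rewrite /mk drop_size_cat ?asz //.
  have := Hrs r0 r r0in rin; rewrite r0m.
  by case: r.2 => [q|] /= h; [apply: (Hc _ _).2 | apply: Hb].
exists (fun w => exists r, w = mk r /\ ltu r.1 r.2).
split; [|split].
- move=> w [r [-> hr]]; split; first by rewrite size_cat asz zpsz.
  have -> : [:: mk r] = map mk [:: r] by [].
  by apply: Hforth => r1 r2 [<-|[]] [<-|[]].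
- exists (fun i => mk (i.+1, None)), (fun j => mk (0, Some j.+1)).
  split; first by move=> i; split; [exists (i.+1, None) | exists (0, Some i.+1)].
  move=> I J sz _.
  set rs := flatten [seq [:: (ij.1.+1, None); (0, Some ij.2.+1)] | ij <- zip I J].
  have -> : flatten [seq [:: mk (ij.1.+1, None); mk (0, Some ij.2.+1)] | ij <- zip I J]
            = map mk rs.
    rewrite /rs map_flatten -map_comp; congr flatten; exact: eq_map.
  have zI : forall i, i \in I -> exists j, (i, j) \in zip I J.
    move=> i; rewrite -{1}(@unzip1_zip _ _ I J) ?sz // => /mapP [[i' j] h /= ->].
    by exists j.
  have zJ : forall j, j \in J -> exists i, (i, j) \in zip I J.
    move=> j; rewrite -{1}(@unzip2_zip _ _ I J) ?sz // => /mapP [[i j'] h /= ->].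
    by exists i.
  have zIJ : forall i j, (i, j) \in zip I J -> i \in I /\ j \in J.
    move=> i j h; split.
      by rewrite -(@unzip1_zip _ _ I J) ?sz //; apply/mapP; exists (i, j).
    by rewrite -(@unzip2_zip _ _ I J) ?sz //; apply/mapP; exists (i, j).
  have inrs : forall r, List.In r rs -> exists i j, (i, j) \in zip I J /\
      (r = (i.+1, None) \/ r = (0, Some j.+1)).
    move=> r /In_flatten [s [/In_map [[i j] [h ->]] hs]].
    exists i, j; split; first by apply/In_mem.
    by case: hs => [<-|[<-|[]]]; auto.
  split.
  + move=> HP; apply/allP => i iI; apply/allP => j jJ.
    have [j' hj'] := zI i iI; have [i' hi'] := zJ j jJ.
    have := Hback _ (i.+1) None 0 (Some j.+1) HP.
    apply.
      apply/In_map; exists (i.+1, None); split => //.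
      by apply/In_flatten; exists [:: (i.+1, None); (0, Some j'.+1)]; split;
        [apply/In_map; exists (i, j'); split => //; apply/In_mem | left].
    apply/In_map; exists (0, Some j.+1); split => //.
    by apply/In_flatten; exists [:: (i'.+1, None); (0, Some j.+1)]; split;
      [apply/In_map; exists (i', j); split => //; apply/In_mem | right; left].
  + move=> Hall; apply: Hforth => r r' /inrs [i [j [hij hr]]] /inrs [i' [j' [hij' hr']]].
    case: hr' => -> //=.
    have [iI _] := zIJ _ _ hij; have [_ jJ] := zIJ _ _ hij'.
    have := allP Hall i iI => /allP /(_ j' jJ) h.
    by case: hr => -> /=.
- move=> ws Hws; split.
    move=> [x [xsz Hx]] w1 w2 h1 h2; exists x; split => // w [<-|[<-|[]]]; auto.
  move=> Hp.
  have [rs Ers] : exists rs, ws = map mk rs.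
    elim: ws Hws {Hp} => [|w ws IH] Hws; first by exists [::].
    have [rs ->] := IH (fun w' h => Hws w' (or_intror h)).
    have [r [-> _]] := Hws w (or_introl erefl).
    by exists (r :: rs).
  rewrite Ers; apply: Hforth => r r' hr hr'.
  have i1 : List.In (mk r) ws by rewrite Ers; apply/In_map; exists r.
  have i2 : List.In (mk r') ws by rewrite Ers; apply/In_map; exists r'.
  case: r r' {hr hr'} i1 i2 => p u [p' u'] i1 i2.
  apply: (Hback [:: mk (p, u); mk (p', u')] p u p' u' (Hp _ _ i1 i2)); [left|right;left] => //.
Qed.
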